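(* Let $\{E_\chi\}_{\chi\in\hat G}\subset\mathcal{P}_n$ be a maximal and non-degenerate correctable set of unitary Pauli errors with $E_1=I$ and $E_\chi(\mathcal{H}_{\rm pn})\subset\mathcal{H}_{\rm pn}^\perp$ for $\chi\ne1$. Let $h:\hat G\times G\to G$ be such that for every $g\in G$, $h(\cdot,g):\hat G\to G$ is a bijection with $h(1,g)=g$. Then for every $g\in G$ the operator $\hat E_g:=\sqrt{2^{n-k}}\sum_{\chi\in\hat G}\hat P_{h(\chi,g)}\Pi_{\rm pn}E_\chi$ is unitary on $\mathcal{H}_{\rm kin}$ and satisfies $\hat E_g\Pi_{\rm pn}=\sqrt{2^{n-k}}\hat P_g\Pi_{\rm pn}$.
   Context: Let $n\ge1$, $0\le k<n$, $\mathcal{H}_{\rm kin}=(\mathbb{C}^2)^{\otimes n}$, $\mathcal{P}_n$ the $n$-qubit Pauli group, $G=\mathbb{Z}_2^{\times(n-k)}$, $U:G\to\mathcal{P}_n$, $g\mapsto U^g$, a faithful unitary representation with $-I\notin U(G)$; $\mathcal{H}_{\rm pn}=\{\psi:U^g\psi=\psi\ \forall g\}$, $\Pi_{\rm pn}=\frac1{|G|}\sum_gU^g$. $\hat G$ is the group of characters $\chi:G\to\{\pm1\}$ with trivial character $1$. $\hat U$ is a unitary representation of $\hat G$ on $\mathcal{H}_{\rm kin}$ dual to $U$ ($U^g\hat U^\chi=\chi(g)\hat U^\chi U^g$), and $\hat P_g=\frac1{2^{n-k}}\sum_\chi\chi(g)\hat U^\chi$. A set $\{E_i\}$ is correctable if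 $\Pi_{\rm pn}E_i^\dagger E_j\Pi_{\rm pn}=C_{ij}\Pi_{\rm pn}$ with $(C_{ij})$ Hermitian; maximal if $\mathrm{rank}(C)=2^{n-k}$; non-degenerate if $C$ is invertible. *)

(* Defs.v *)
From HB Require Import structures.
From mathcomp Require Import all_boot all_order all_algebra all_field.
Set Implicit Arguments. Unset Strict Implicit. Unset Printing Implicit Defensive.
Import GRing.Theory Num.Theory.
Local Open Scope ring_scope.

Definition dag (m n : nat) (A : 'M[algC]_(m, n)) : 'M[algC]_(n, m) :=
  (map_mx (@Num.conj_op algC) A)^T.

Definition unitary (N : nat) (A : 'M[algC]_N) : Prop :=
  dag A *m A = 1%:M /\ A *m dag A = 1%:M.

(* Single-qubit Pauli matrices: 0 = I, 1 = X, 2 = Y, 3 = Z. *)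
Definition sigma (a : 'I_4) : 'M[algC]_2 :=
  \matrix_(i, j)
    match val a with
    | 0 => (i == j)%:R
    | 1 => (i != j)%:R
    | 2 => if i == j then 0 else if val i == 0 then - 'i else 'i
    | _ => if i == j then (if val i == 0 then 1 else -1) else 0
    end.

(* q-th bit of a computational basis index of (C^2)^{\otimes n}. *)
Definition qbit (n : nat) (q : nat) (i : 'I_(2 ^ n)) : 'I_2 :=
  inord ((i %/ 2 ^ q) %% 2).

(* Tensor product sigma_{a_0} (x) ... (x) sigma_{a_{n-1}}, written entrywise. *)
Definition pauli_string (n : nat) (a : n.-tuple 'I_4) : 'M[algC]_(2 ^ n) :=
  \matrix_(i, j) \prod_(q < n) sigma (tnth a q) (qbit q i) (qbit q j).

Definition pauli_group (n : nat) (M : 'M[algC]_(2 ^ n)) : Prop :=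
  exists (c : 'I_4) (a : n.-tuple 'I_4), M = 'i ^+ c *: pauli_string a.

(* G = Z_2^m realised as the additive group 'rV['F_2]_m. *)
(* Characters chi : G -> {+1,-1} are encoded as boolean functions
   (true <-> -1) that are homomorphisms to (bool, xor). *)
Definition is_charb (m : nat) (f : {ffun 'rV['F_2]_m -> bool}) : bool :=
  [forall g, forall h, f (g + h) == addb (f g) (f h)].

Definition Ghat (m : nat) := {f : {ffun 'rV['F_2]_m -> bool} | is_charb f}.

Definition chi_val (m : nat) (chi : Ghat m) (g : 'rV['F_2]_m) : algC :=
  (-1) ^+ (val chi g).

Definition is_triv (m : nat) (chi : Ghat m) : Prop :=
  forall g, chi_val chi g = 1.

Definition Pi_pn (N m : nat) (U : 'rV['F_2]_m -> 'M[algC]_N) : 'M[algC]_N :=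
  (#|{: 'rV['F_2]_m}|%:R)^-1 *: \sum_g U g.

Definition Phat (N m : nat) (Uh : Ghat m -> 'M[algC]_N) (g : 'rV['F_2]_m)
  : 'M[algC]_N :=
  ((2 ^ m)%:R)^-1 *: \sum_(chi : Ghat m) chi_val chi g *: Uh chi.

(* Main.v *)
Require Import Defs.
From HB Require Import structures.
From mathcomp Require Import all_boot all_order all_algebra all_field.
From mathcomp Require Import zify ring.
Import GRing.Theory Num.Theory.
Local Open Scope ring_scope.

Definition b1 : 'I_2 := @Ordinal 2 1 isT.
Definition bitn (q l : nat) : 'I_2 := inord ((l %/ 2 ^ q) %% 2).

Lemma bitn_add (q n l : nat) : (q < n)%N -> bitn q (l + 2 ^ n) = bitn q l.
Proof.
move=> qn; rewrite /bitn; congr inord.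
have -> : (2 ^ n = 2 ^ q * 2 ^ (n - q))%N by rewrite -expnD subnKC // ltnW.
rewrite divnDr ?dvdn_mulr // mulKn ?expn_gt0 //.
have : (2 %| 2 ^ (n - q))%N by rewrite dvdn_exp // subn_gt0.
by move/dvdnP=> [c ->]; rewrite addnC modnMDl.
Qed.

Lemma bitn_top (n l : nat) : (l < 2 ^ n)%N -> bitn n (l + 2 ^ n) = b1.
Proof.
move=> ln; apply/val_inj; rewrite /bitn /= divnDr // divnn expn_gt0 /= divn_small //.
by rewrite inordK.
Qed.

Lemma bitn_low (n l : nat) : (l < 2 ^ n)%N -> bitn n l = ord0.
Proof.
by move=> ln; apply/val_inj; rewrite /bitn /= divn_small // inordK.
Qed.

Lemma sum_prod_bits (n : nat) (F : nat -> 'I_2 -> algC) :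
  \sum_(0 <= l < 2 ^ n) \prod_(0 <= q < n) F q (bitn q l)
  = \prod_(0 <= q < n) (F q ord0 + F q b1).
Proof.
elim: n => [|n IH]; first by rewrite expn0 big_nat1 !big_geq.
have h2: (2 ^ n <= 2 ^ n.+1)%N by rewrite leq_exp2l.
rewrite (@big_cat_nat _ _ _ (2^n)%N 0 (2^n.+1)%N) //= /=.
rewrite [RHS]big_nat_recr //= mulrDr -IH !mulr_suml.
congr (_ + _).
  apply: eq_big_nat => l /andP[_ ln].
  by rewrite big_nat_recr //= bitn_low.
rewrite -{1}(add0n (2^n)%N) big_addn.
have -> : (2 ^ n.+1 - 2 ^ n = 2 ^ n)%N by rewrite expnS mul2n -addnn addnK.
apply: eq_big_nat => l /andP[_ ln].
rewrite big_nat_recr //= bitn_top //; congr (_ * _).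
by apply: eq_big_nat => q /andP[_ qn]; rewrite bitn_add.
Qed.

Lemma bits_inj (n i j : nat) : (i < 2 ^ n)%N -> (j < 2 ^ n)%N ->
  (forall q, (q < n)%N -> bitn q i = bitn q j) -> i = j.
Proof.
elim: n i j => [|n IH] i j; first by rewrite expn0 !ltnS !leqn0 => /eqP-> /eqP->.
move=> hi hj hb.
have h0 := hb 0%N (ltn0Sn n).
move: h0; rewrite /bitn !expn0 !divn1 => /(congr1 val); rewrite /= !inordK ?ltn_pmod // => h0.
have hh : (i %/ 2 = j %/ 2)%N.
  apply: IH; rewrite ?ltn_divLR // -?expnSr //.
  move=> q qn; have := hb q.+1 qn; rewrite /bitn expnSr mulnC !divnMA //.
by rewrite (divn_eq i 2) (divn_eq j 2) hh h0.
Qed.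

Lemma sum2 (F : 'I_2 -> algC) : \sum_(b < 2) F b = F ord0 + F b1.
Proof. by rewrite !big_ord_recr big_ord0 /= add0r; congr (F _ + F _); apply/val_inj. Qed.

Definition T (n : nat) (f : nat -> 'M[algC]_2) : 'M[algC]_(2 ^ n) :=
  \matrix_(i, j) \prod_(q < n) f q (bitn q i) (bitn q j).

Lemma T_mul n (f g : nat -> 'M[algC]_2) :
  T n f *m T n g = T n (fun q => f q *m g q).
Proof.
apply/matrixP=> i j; rewrite !mxE.
under eq_bigr => l _ do rewrite !mxE -big_split /=.
transitivity (\sum_(0 <= l < 2 ^ n) \prod_(0 <= q < n) (f q (bitn q i) (bitn q l) * g q (bitn q l) (bitn q j))).
  by rewrite big_mkord; apply: eq_bigr => l _; rewrite big_mkord.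
rewrite (sum_prod_bits n (fun q b => f q (bitn q i) b * g q b (bitn q j))) big_mkord.
by apply: eq_bigr => q _; rewrite mxE sum2.
Qed.


Lemma conjNi : (- 'i : algC)^* = 'i.
Proof. by rewrite -conjCi conjCK. Qed.
Lemma conjN1 : (- 1 : algC)^* = -1.
Proof. by rewrite raddfN /= conjC1. Qed.

Ltac csimp := rewrite ?(mul0r, mulr0, mul1r, mulr1, add0r, addr0, mulNr, mulrN, opprK, mulN1r, mulrN1, expr0, expr1, oppr0);
  rewrite -?expr2 ?sqrCi ?opprK ?conjCi ?conjC1 ?conjC0 ?conjNi ?conjN1 //.

Lemma sigma_sq a : sigma a *m sigma a = 1%:M.
Proof.
case: a => [[|[|[|[|a]]]] Ha] //; apply/matrixP => i j; rewrite !mxE sum2 !mxE /=;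
case: i => [[|[|i]] Hi] //; case: j => [[|[|j]] Hj] //=; csimp.
Qed.

Lemma sigma_herm a i j : (sigma a j i)^* = sigma a i j.
Proof.
case: a => [[|[|[|[|a]]]] Ha] //; rewrite !mxE /=;
case: i => [[|[|i]] Hi] //; case: j => [[|[|j]] Hj] //=; csimp.
Qed.

Definition sgn (a b : 'I_4) : bool := [&& val a != 0%N, val b != 0%N & a != b].

Lemma sigma_comm a b : sigma a *m sigma b = (-1) ^+ sgn a b *: (sigma b *m sigma a).
Proof.
case: a => [[|[|[|[|a]]]] Ha] //; case: b => [[|[|[|[|b]]]] Hb] //; apply/matrixP => i j; rewrite !mxE !sum2 !mxE /=;
case: i => [[|[|i]] Hi] //; case: j => [[|[|j]] Hj] //=; csimp.
Qed.

Lemma pauli_T n (a : n.-tuple 'I_4) : pauli_string a = T n (fun q => sigma (nth ord0 a q)).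
Proof. by apply/matrixP=> i j; rewrite !mxE; apply: eq_bigr => q _; rewrite (tnth_nth ord0). Qed.

Lemma eq_T n f g : (forall q, f q = g q) -> T n f = T n g.
Proof. by move=> H; apply/matrixP=> i j; rewrite !mxE; apply: eq_bigr => q _; rewrite H. Qed.

Lemma T_one n : T n (fun _ => 1%:M) = 1%:M.
Proof.
apply/matrixP=> i j; rewrite !mxE.
case: (eqVneq i j) => [->|nij].
  by rewrite /= big1 // => q _; rewrite mxE eqxx.
have [q hq] : exists q : 'I_n, bitn q i != bitn q j.
  case/boolP: [exists q : 'I_n, bitn q i != bitn q j] => [/existsP//|].
  rewrite negb_exists => /forallP H; move/eqP: nij; case; apply/val_inj.
  apply: (@bits_inj n); [exact: ltn_ord|exact: ltn_ord|move=> q qn]; have := H (Ordinal qn); by rewrite negbK => /eqP.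
by rewrite (bigD1 q) //= mxE (negbTE hq) mul0r.
Qed.

Lemma T_scale n (s : nat -> algC) f : T n (fun q => s q *: f q) = (\prod_(q < n) s q) *: T n f.
Proof.
by apply/matrixP=> i j; rewrite !mxE -big_split /=; apply: eq_bigr => q _; rewrite mxE.
Qed.

Lemma pauli_sq n (a : n.-tuple 'I_4) : pauli_string a *m pauli_string a = 1%:M.
Proof. by rewrite pauli_T T_mul (@eq_T _ _ _ (fun q => sigma_sq _)) T_one. Qed.

Lemma pauli_dag n (a : n.-tuple 'I_4) : dag (pauli_string a) = pauli_string a.
Proof.
apply/matrixP=> i j; rewrite !mxE rmorph_prod; apply: eq_bigr => q _.
exact: sigma_herm.
Qed.

Lemma pauli_comm n (a c : n.-tuple 'I_4) : exists b : bool,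
  pauli_string a *m pauli_string c = (-1) ^+ b *: (pauli_string c *m pauli_string a).
Proof.
rewrite !pauli_T !T_mul.
rewrite (@eq_T _ _ _ (fun q => sigma_comm _ _)).
rewrite T_scale.
have : exists b : bool, \prod_(q < n) ((-1) ^+ sgn (nth ord0 a q) (nth ord0 c q) : algC) = (-1) ^+ b.
  apply: (big_ind (fun x : algC => exists b : bool, x = (-1) ^+ b)).
  - by exists false.
  - by move=> x y [b1 ->] [b2 ->]; exists (b1 (+) b2); rewrite signr_addb.
  - by move=> q _; exists (sgn (nth ord0 a q) (nth ord0 c q)).
by move=> [b ->]; exists b.
Qed.

Lemma dagM m n p (A : 'M[algC]_(m, n)) (B : 'M[algC]_(n, p)) : dag (A *m B) = dag B *m dag A.
Proof.
apply/matrixP=> i j; rewrite !mxE rmorph_sum; apply: eq_bigr => l _.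
by rewrite !mxE rmorphM mulrC.
Qed.

Lemma dagZ m n (a : algC) (A : 'M[algC]_(m, n)) : dag (a *: A) = a^* *: dag A.
Proof. by apply/matrixP=> i j; rewrite !mxE rmorphM. Qed.

Lemma dagD m n (A B : 'M[algC]_(m, n)) : dag (A + B) = dag A + dag B.
Proof. by apply/matrixP=> i j; rewrite !mxE rmorphD. Qed.

Lemma dag_sum m n (I : finType) (F : I -> 'M[algC]_(m, n)) : dag (\sum_i F i) = \sum_i dag (F i).
Proof.
apply/matrixP=> i j; rewrite !mxE summxE rmorph_sum summxE; apply: eq_bigr => l _.
by rewrite !mxE.
Qed.

Lemma dagK m n (A : 'M[algC]_(m, n)) : dag (dag A) = A.
Proof. by apply/matrixP=> i j; rewrite !mxE conjCK. Qed.

Lemma dag1 n : dag (1%:M : 'M[algC]_n) = 1%:M.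
Proof. by apply/matrixP=> i j; rewrite !mxE eq_sym; case: (i == j); rewrite /= ?conjC1 ?conjC0. Qed.

Lemma dagB m n (A B : 'M[algC]_(m, n)) : dag (A - B) = dag A - dag B.
Proof. by apply/matrixP=> i j; rewrite !mxE rmorphB. Qed.

Lemma normi_pow (c : nat) : ('i ^+ c : algC)^* * 'i ^+ c = 1.
Proof. by rewrite mulrC -normCK normrX normCi expr1n expr1n. Qed.

Lemma pg_unitary n (M : 'M[algC]_(2 ^ n)) : pauli_group M -> unitary M.
Proof.
move=> [c [a ->]]; rewrite /unitary dagZ pauli_dag.
rewrite -!scalemxAl -!scalemxAr !scalerA pauli_sq normi_pow mulrC normi_pow.
by rewrite !scale1r.
Qed.

Lemma pg_sandwich n (M X : 'M[algC]_(2 ^ n)) : pauli_group M ->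
  dag M *m X *m M = M *m X *m dag M.
Proof.
move=> [c [a ->]]; rewrite dagZ pauli_dag.
rewrite -!scalemxAl -!scalemxAr !scalerA normi_pow mulrC normi_pow.
done.
Qed.

Lemma pg_comm n (M N : 'M[algC]_(2 ^ n)) : pauli_group M -> pauli_group N ->
  exists b : bool, M *m N = (-1) ^+ b *: (N *m M).
Proof.
move=> [c [a ->]] [d [e ->]]; have [b hb] := @pauli_comm n a e; exists b.
rewrite -!scalemxAl -!scalemxAr !scalerA hb !scalerA; congr (_ *: _).
ring.
Qed.

Set Implicit Arguments. Unset Strict Implicit.

Lemma F2_add (a b : 'F_2) : (a + b != 0) = (a != 0) (+) (b != 0).
Proof. by move: a b => [[|[|?]] ?] [[|[|?]] ?]. Qed.

Lemma F2_dbl m (a : 'rV['F_2]_m) : a + a = 0.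
Proof.
apply/rowP => j; rewrite !mxE; by move: (a 0 j) => [[|[|?]] ?]; apply/val_inj.
Qed.


Lemma charb_add m (chi : Ghat m) a b : val chi (a + b) = val chi a (+) val chi b.
Proof. by have /forallP/(_ a)/forallP/(_ b)/eqP := valP chi. Qed.

Lemma chiM m (chi : Ghat m) a b : chi_val chi (a + b) = chi_val chi a * chi_val chi b.
Proof. by rewrite /chi_val charb_add signr_addb. Qed.

Lemma charb0 m (chi : Ghat m) : val chi 0 = false.
Proof. by have := charb_add chi 0 0; rewrite addr0; case: (val chi 0). Qed.

Lemma chi0 m (chi : Ghat m) : chi_val chi 0 = 1.
Proof. by rewrite /chi_val charb0. Qed.

Lemma chi_sq m (chi : Ghat m) a : chi_val chi a * chi_val chi a = 1.
Proof. by rewrite -signr_addb addbb. Qed.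

Lemma chi_conj m (chi : Ghat m) a : (chi_val chi a)^* = chi_val chi a.
Proof. by rewrite /chi_val; case: (val chi a) => /=; rewrite ?expr1 ?expr0 ?conjC1 // raddfN /= conjC1. Qed.

Lemma selfneg (x : algC) : x = - x -> x = 0.
Proof. by move/eqP; rewrite -addr_eq0 -mulr2n mulrn_eq0 /= => /eqP. Qed.

Lemma triv_charb m : is_charb ([ffun=> false] : {ffun 'rV['F_2]_m -> bool}).
Proof. by apply/forallP=> g; apply/forallP=> h; rewrite !ffunE. Qed.

Definition triv m : Ghat m := exist (fun f => is_charb f) _ (triv_charb m).

Lemma is_trivP m (chi : Ghat m) : is_triv chi <-> chi = triv m.
Proof.
split.
  move=> H; apply/val_inj/ffunP=> g; rewrite /= ffunE.
  have := H g; rewrite /chi_val; case: (val chi g) => //=; rewrite expr1 => h.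
  have h' : (1:algC) = -1 by rewrite -h opprK.
  by move/eqP: (selfneg h'); rewrite oner_eq0.
by move=> -> g; rewrite /chi_val /= ffunE.
Qed.

Lemma chi_triv m g : chi_val (triv m) g = 1.
Proof. by rewrite /chi_val /= ffunE. Qed.

Lemma mul_charb m (chi psi : Ghat m) :
  is_charb ([ffun g => val chi g (+) val psi g] : {ffun 'rV['F_2]_m -> bool}).
Proof.
apply/forallP=> g; apply/forallP=> h; rewrite !ffunE !charb_add.
by apply/eqP; case: (val chi g); case: (val chi h); case: (val psi g); case: (val psi h).
Qed.

Definition chimul m (chi psi : Ghat m) : Ghat m := exist (fun f => is_charb f) _ (mul_charb chi psi).

Lemma chimulE m (chi psi : Ghat m) g : chi_val (chimul chi psi) g = chi_val chi g * chi_val psi g.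
Proof. by rewrite /chi_val /= ffunE signr_addb. Qed.

Lemma chimulK m (chi psi : Ghat m) : chimul chi (chimul chi psi) = psi.
Proof. by apply/val_inj/ffunP=> g; rewrite /= !ffunE addKb. Qed.

Lemma chimul_inj m (chi : Ghat m) : injective (chimul chi).
Proof. exact: can_inj (chimulK chi). Qed.

Lemma chimul_vv m (chi : Ghat m) : chimul chi chi = triv m.
Proof. by apply/val_inj/ffunP=> g; rewrite /= !ffunE addbb. Qed.


Lemma sum_chi_g m (chi : Ghat m) :
  \sum_(g : 'rV['F_2]_m) chi_val chi g = if chi == triv m then #|{: 'rV['F_2]_m}|%:R else 0.
Proof.
case: eqP => [->|nt].
  by rewrite (eq_bigr (fun _ => 1)) ?sumr_const // => g _; rewrite chi_triv.
have [g0 hg0] : exists g0, val chi g0.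
  case/boolP: [exists g0, val chi g0] => [/existsP//|].
  rewrite negb_exists => /forallP H; case: nt; apply/val_inj/ffunP => g.
  by rewrite /= ffunE; apply/negbTE/H.
apply: selfneg; rewrite {1}(reindex_inj (addIr g0)) /=.
rewrite -sumrN; apply: eq_bigr => g _; rewrite chiM /chi_val hg0 expr1 mulrN1.
by [].
Qed.

Lemma sum_g_chi m (g : 'rV['F_2]_m) :
  \sum_(chi : Ghat m) chi_val chi g = if g == 0 then #|{: Ghat m}|%:R else 0.
Proof.
case: eqP => [->|nz].
  by rewrite (eq_bigr (fun _ => 1)) ?sumr_const // => chi _; rewrite chi0.
have [j hj] : exists j, g 0 j != 0.
  case/boolP: [exists j, g 0 j != 0] => [/existsP//|].
  rewrite negb_exists => /forallP H; case: nz; apply/rowP => j.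
  by rewrite mxE; apply/eqP; have := H j; rewrite negbK.
have c0 : is_charb ([ffun x : 'rV['F_2]_m => x 0 j != 0]).
  by apply/forallP=> x; apply/forallP=> y; rewrite !ffunE mxE F2_add.
pose chi0 : Ghat m := exist (fun f => is_charb f) _ c0.
apply: selfneg; rewrite {1}(reindex_inj (@chimul_inj m chi0)) /=.
rewrite -sumrN; apply: eq_bigr => chi _; rewrite chimulE /chi_val /= ffunE hj expr1 mulN1r.
by [].
Qed.

Lemma proj_tr0 N (A : 'M[algC]_N) : dag A = A -> A *m A = A -> \tr A = 0 -> A = 0.
Proof.
move=> hA iA t0.
have : \sum_i \sum_j `|A j i| ^+ 2 = 0.
  transitivity (\tr (dag A *m A)); last by rewrite hA iA.
  rewrite /mxtrace; apply: eq_bigr => i _; rewrite mxE.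
  by apply: eq_bigr => j _; rewrite !mxE normCK mulrC.
move=> H; apply/matrixP => j i; rewrite mxE.
have Hi := @psumr_eq0P _ _ _ _ (fun i _ => sumr_ge0 _ (fun j _ => exprn_ge0 2 (normr_ge0 (A j i)))) H i isT.
have := @psumr_eq0P _ _ _ _ (fun j _ => exprn_ge0 2 (normr_ge0 (A j i))) Hi j isT.
by move/eqP; rewrite expf_eq0 /= normr_eq0 => /eqP.
Qed.

Unset Implicit Arguments. Set Strict Implicit.

Lemma herm_of_sq N (A : 'M[algC]_N) : unitary A -> A *m A = 1%:M -> dag A = A.
Proof. by move=> [h1 _] h2; rewrite -[dag A]mulmx1 -h2 mulmxA h1 mul1mx. Qed.

Lemma scal_cancel N (P : 'M[algC]_N) c d : P != 0 -> c *: P = d *: P -> c = d.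
Proof.
move=> nz /eqP; rewrite -subr_eq0 -scalerBl scalemx_eq0 (negbTE nz) orbF subr_eq0.
by move/eqP.
Qed.

Lemma dag_delta N (i : 'I_N) : dag (delta_mx i 0 : 'cV[algC]_N) = delta_mx 0 i.
Proof. by apply/matrixP=> a b; rewrite !mxE conjC_nat andbC.
Qed.

Lemma entry_delta N (X : 'M[algC]_N) i j : ((delta_mx 0 i : 'rV[algC]_N) *m X *m (delta_mx j 0 : 'cV[algC]_N)) 0 0 = X i j.
Proof. by rewrite -rowE -colE !mxE. Qed.

Lemma conj_sign (b : bool) : (((-1) ^+ b : algC))^* = (-1) ^+ b.
Proof. by case: b; rewrite ?expr1 ?expr0 ?conjC1 // raddfN /= conjC1. Qed.

Theorem mainTheorem16 (n k : nat) (hk : (k < n)%N)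
  (U : 'rV['F_2]_(n - k) -> 'M[algC]_(2 ^ n))
  (Uh : Ghat (n - k) -> 'M[algC]_(2 ^ n))
  (E : Ghat (n - k) -> 'M[algC]_(2 ^ n))
  (h : Ghat (n - k) -> 'rV['F_2]_(n - k) -> 'rV['F_2]_(n - k)) :
  (forall g, pauli_group (U g)) ->
  (forall g, unitary (U g)) ->
  U 0 = 1%:M ->
  (forall g1 g2, U (g1 + g2) = U g1 *m U g2) ->
  injective U ->
  (forall g, U g != - 1%:M) ->
  (forall chi, unitary (Uh chi)) ->
  (forall chi, is_triv chi -> Uh chi = 1%:M) ->
  (forall chi psi phi, (forall g, chi_val phi g = chi_val chi g * chi_val psi g) ->
      Uh phi = Uh chi *m Uh psi) ->
  (forall g chi, U g *m Uh chi = chi_val chi g *: (Uh chi *m U g)) ->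
  (forall chi, pauli_group (E chi)) ->
  (exists C : Ghat (n - k) -> Ghat (n - k) -> algC,
     [/\ forall chi psi,
           Pi_pn U *m dag (E chi) *m E psi *m Pi_pn U = C chi psi *: Pi_pn U,
         forall chi psi, C psi chi = (C chi psi)^*,
         \rank (\matrix_(i < #|{: Ghat (n - k)}|, j < #|{: Ghat (n - k)}|)
                  C (enum_val i) (enum_val j)) = (2 ^ (n - k))%N
       & (\matrix_(i < #|{: Ghat (n - k)}|, j < #|{: Ghat (n - k)}|)
                  C (enum_val i) (enum_val j)) \in unitmx]) ->
  (forall chi, is_triv chi -> E chi = 1%:M) ->
  (forall chi, ~ is_triv chi -> forall v w : 'cV[algC]_(2 ^ n),
      Pi_pn U *m v = v -> Pi_pn U *m w = w -> dag w *m (E chi *m v) = 0) ->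
  (forall g, bijective (fun chi => h chi g)) ->
  (forall chi g, is_triv chi -> h chi g = g) ->
  forall g,
    let Ehat := sqrtC (2 ^ (n - k))%:R *:
                  \sum_(chi : Ghat (n - k))
                     Phat Uh (h chi g) *m Pi_pn U *m E chi in
    unitary Ehat /\
    Ehat *m Pi_pn U = sqrtC (2 ^ (n - k))%:R *: (Phat Uh g *m Pi_pn U).
Proof.
move=> hUp hUu hU0 hUM hUinj hUnI hUhu hUh1 hUhM hdual hEp [C [hC hCh hrk hCu]]
  hE1 hEorth hbij hh1 g.
move: hUp hUu hU0 hUM hUinj hUnI hUhu hUh1 hUhM hdual hEp hC hCh hrk hCu hE1 hEorth hbij hh1 g.
set m := (n - k)%N.
move Pi_def: (Pi_pn U) => Pi.
move=> hUp hUu hU0 hUM hUinj hUnI hUhu hUh1 hUhM hdual hEp hC hCh hrk hCu hE1 hEorth hbij hh1 g.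
set M : algC := #|{: 'rV['F_2]_m}|%:R.
have PiE : Pi = M^-1 *: \sum_g0 U g0 by rewrite -Pi_def.
have cardG : #|{: 'rV['F_2]_m}| = (2 ^ m)%N.
  by rewrite card_mx card_ord mul1n.
have cardGh : #|{: Ghat m}| = (2 ^ m)%N by rewrite -hrk mxrank_unit.
have M2 : M = (2 ^ m)%:R by rewrite /M cardG.
have Mnz : M != 0 by rewrite M2 pnatr_eq0 expn_eq0.
have UU g' : U g' *m U g' = 1%:M by rewrite -hUM F2_dbl hU0.
have Uherm g' : dag (U g') = U g' by apply: herm_of_sq.
have UhUh chi : Uh chi *m Uh chi = 1%:M.
  rewrite -(hUh1 (triv m)) ?(is_trivP (triv m)) //; symmetry; apply: hUhM => g'.
  by rewrite chi_triv chi_sq.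
have Uhherm chi : dag (Uh chi) = Uh chi by apply: herm_of_sq.
have UPi g' : U g' *m Pi = Pi.
  rewrite PiE -scalemxAr mulmx_sumr; congr (_ *: _).
  rewrite [RHS](reindex_inj (addrI g')) /=; apply: eq_bigr => x _; by rewrite hUM.
have PiU g' : Pi *m U g' = Pi.
  rewrite PiE -scalemxAl mulmx_suml; congr (_ *: _).
  rewrite [RHS](reindex_inj (addIr g')) /=; apply: eq_bigr => x _; by rewrite hUM.
have PiPi : Pi *m Pi = Pi.
  rewrite {1}PiE -scalemxAl mulmx_suml.
  under eq_bigr => x _ do rewrite UPi.
  by rewrite sumr_const -scaler_nat scalerA mulVf // scale1r.
have Piherm : dag Pi = Pi.
  rewrite PiE dagZ dag_sum geC0_conj ?invr_ge0 ?ler0n //; congr (_ *: _).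
  by apply: eq_bigr => x _; rewrite Uherm.
have PiUhPi chi : Pi *m Uh chi *m Pi = if chi == triv m then Pi else 0.
  case: eqP => [->|nt]; first by rewrite hUh1 ?(is_trivP (triv m)) // mulmx1 PiPi.
  have -> : Pi *m Uh chi = M^-1 *: \sum_g0 chi_val chi g0 *: (Uh chi *m U g0).
    rewrite PiE -scalemxAl mulmx_suml; congr (_ *: _); apply: eq_bigr => x _; exact: hdual.
  rewrite -scalemxAl mulmx_suml.
  under eq_bigr => x _ do rewrite -scalemxAl -mulmxA UPi.
  rewrite -scaler_suml sum_chi_g; case: eqP => // _.
  by rewrite scale0r scaler0.
have UhUUh chi g' : Uh chi *m U g' *m Uh chi = chi_val chi g' *: U g'.
  by rewrite -mulmxA hdual -scalemxAr mulmxA UhUh mul1mx.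
have sumUhPiUh : \sum_chi Uh chi *m Pi *m Uh chi = 1%:M.
  have e chi : Uh chi *m Pi *m Uh chi = M^-1 *: \sum_g0 chi_val chi g0 *: U g0.
    rewrite PiE -scalemxAr -scalemxAl mulmx_sumr mulmx_suml; congr (_ *: _).
    by apply: eq_bigr => x _; rewrite UhUUh.
  rewrite (eq_bigr _ (fun chi _ => e chi)) -scaler_sumr exchange_big /=.
  under eq_bigr => x _ do rewrite -scaler_suml sum_g_chi.
  rewrite (bigD1 0) //= big1 => [|x /negbTE ->]; last by rewrite scale0r.
  by rewrite eqxx addr0 cardGh -M2 scalerA mulVf // scale1r hU0.
set Ph := Phat Uh.
have K2 : ((2 ^ m)%:R : algC) != 0 by rewrite pnatr_eq0 expn_eq0.
have Phherm a : dag (Ph a) = Ph a.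
  rewrite /Ph /Phat dagZ dag_sum geC0_conj ?invr_ge0 ?ler0n //; congr (_ *: _).
  by apply: eq_bigr => x _; rewrite dagZ chi_conj Uhherm.
have abF (a b : 'rV['F_2]_m) : (a + b == 0) = (a == b).
  by rewrite addr_eq0; have := F2_dbl b; move/eqP; rewrite addr_eq0 => /eqP <-.
have PhPh a b : Ph a *m Ph b = if a == b then Ph a else 0.
  rewrite /Ph /Phat -scalemxAl -scalemxAr scalerA mulmx_suml.
  have inner chi : (chi_val chi a *: Uh chi) *m (\sum_psi chi_val psi b *: Uh psi)
      = \sum_psi (chi_val chi (a + b) * chi_val psi b) *: Uh psi.
    rewrite -scalemxAl mulmx_sumr scaler_sumr [LHS](reindex_inj (@chimul_inj m chi)) /=.
    apply: eq_bigr => psi _.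
    rewrite -scalemxAr scalerA (hUhM chi psi (chimul chi psi)); last by move=> g0; rewrite chimulE.
    by rewrite mulmxA UhUh mul1mx chimulE chiM mulrA.
  rewrite (eq_bigr _ (fun chi _ => inner chi)) exchange_big /=.
  under eq_bigr => x _ do rewrite -scaler_suml -mulr_suml sum_g_chi abF.
  case: eqP => [<-|_]; last first.
    by rewrite big1 ?scaler0 // => x _; rewrite mul0r scale0r.
  under eq_bigr => x _ do rewrite -scalerA.
  rewrite -scaler_sumr scalerA cardGh; congr (_ *: _); field; done.
have PiPhPi a : Pi *m Ph a *m Pi = (2 ^ m)%:R^-1 *: Pi.
  rewrite /Ph /Phat -scalemxAr -scalemxAl mulmx_sumr mulmx_suml; congr (_ *: _).
  under eq_bigr => x _ do rewrite -scalemxAr -scalemxAl PiUhPi.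
  rewrite (bigD1 (triv m)) //= eqxx chi_triv scale1r big1 ?addr0 // => x /negbTE ->.
  by rewrite scaler0.
have Pinz : Pi != 0.
  apply/eqP => P0; have := sumUhPiUh; rewrite P0 big1 => [|x _]; last by rewrite mulmx0 mul0mx.
  move/(congr1 mxtrace); rewrite mxtrace0 mxtrace1 => /eqP; rewrite eq_sym pnatr_eq0 expn_eq0.
  by [].
have PiEPi chi : chi != triv m -> Pi *m E chi *m Pi = 0.
  move=> nt; have ntr : ~ is_triv chi by move/is_trivP => e; move/eqP: nt.
  have Hc l : Pi *m col l Pi = col l Pi by rewrite colE mulmxA PiPi.
  apply/matrixP => i j; rewrite -entry_delta [RHS]mxE.
  have := hEorth chi ntr (col j Pi) (col i Pi) (Hc j) (Hc i).
  by rewrite !colE dagM Piherm dag_delta !mulmxA => ->; rewrite mxE.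
have Eu chi : unitary (E chi) := @pg_unitary n _ (hEp chi).
have sand a b : Pi *m dag (E a) *m E b *m Pi = dag (E a *m Pi) *m (E b *m Pi).
  by rewrite dagM Piherm !mulmxA.
have Cdiag chi : C chi chi = 1.
  have := hC chi chi; rewrite -(mulmxA Pi (dag _)) (Eu chi).1 mulmx1 PiPi => e.
  by apply: (@scal_cancel _ Pi _ _ Pinz); rewrite scale1r.
have Coff chi psi : chi != psi -> C chi psi = 0.
  move=> ne; apply/eqP; apply/negP => Cnz.
  set X := dag (E chi) *m E psi.
  pose eps g' : algC := if U g' *m X == X *m U g' then 1 else -1.
  have UX g' : U g' *m X = eps g' *: (X *m U g').
    have [b1 h1] := @pg_comm n _ _ (hEp chi) (hUp g').
    have [b2 h2] := @pg_comm n _ _ (hUp g') (hEp psi).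
    have h1' : U g' *m dag (E chi) = (-1) ^+ b1 *: (dag (E chi) *m U g').
      by have := congr1 (@dag _ _) h1; rewrite !dagM dagZ dagM !Uherm conj_sign.
    have key : U g' *m X = (-1) ^+ (b1 (+) b2) *: (X *m U g').
      rewrite /X mulmxA h1' -scalemxAl -mulmxA h2 -scalemxAr scalerA mulmxA.
      by rewrite signr_addb.
    rewrite /eps; case: eqP => [-> | neq]; first by rewrite scale1r.
    move: key; case: (b1 (+) b2) => /=; first by rewrite expr1.
    by rewrite expr0 scale1r.
  have PXP : Pi *m X *m Pi = (M^-1 * \sum_g' eps g') *: (X *m Pi).
    rewrite {1}PiE -!scalemxAl !mulmx_suml -scalerA; congr (_ *: _).
    rewrite scaler_suml; apply: eq_bigr => x _.
    by rewrite UX -!scalemxAl -mulmxA UPi.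
  set s := M^-1 * \sum_g' eps g' in PXP.
  have hCp := hC chi psi; rewrite -(mulmxA Pi (dag _)) -/X PXP in hCp.
  have snz : s != 0.
    apply/eqP => s0; move: hCp; rewrite s0 scale0r => /esym/eqP.
    by rewrite scalemx_eq0 (negbTE (introN idP Cnz)) (negbTE Pinz).
  set c := C chi psi / s.
  have XPi : X *m Pi = c *: Pi.
    by rewrite /c mulrC -scalerA -hCp scalerA mulVf // scale1r.
  have EPi : E psi *m Pi = c *: (E chi *m Pi).
    have : E chi *m (X *m Pi) = E psi *m Pi by rewrite /X !mulmxA (Eu chi).2 mul1mx.
    by move <-; rewrite XPi scalemxAr.
  have rows phi : C psi phi = c^* * C chi phi.
    apply: (@scal_cancel _ Pi _ _ Pinz); rewrite -hC sand EPi dagZ -!scalemxAl -sand hC.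
    by rewrite scalerA.
  pose Cm := \matrix_(i < #|{: Ghat m}|, j < #|{: Ghat m}|) C (enum_val i) (enum_val j).
  pose v : 'rV[algC]_(#|{: Ghat m}|) := delta_mx 0 (enum_rank psi) - c^* *: delta_mx 0 (enum_rank chi).
  have vC : v *m Cm = 0.
    rewrite /v mulmxBl -scalemxAl -!rowE; apply/rowP => j; rewrite !mxE !enum_rankK rows.
    by rewrite subrr.
  have v0 : v = 0 by rewrite -[v](mulmxK hCu) vC mul0mx.
  have := congr1 (fun A : 'rV[algC]_(#|{: Ghat m}|) => A 0 (enum_rank psi)) v0.
  rewrite /v !mxE eqxx /=.
  have -> : (enum_rank psi == enum_rank chi) = false.
    by apply/negbTE; apply: contra ne => /eqP/enum_rank_inj ->.
  by rewrite mulr0 subr0 eqxx => /eqP; rewrite oner_eq0.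
have Cd chi psi : Pi *m dag (E chi) *m E psi *m Pi = if chi == psi then Pi else 0.
  rewrite hC; case: eqP => [->|ne]; first by rewrite Cdiag scale1r.
  by rewrite Coff ?scale0r //; apply/eqP.
have sumEPiE : \sum_chi E chi *m Pi *m dag (E chi) = 1%:M.
  set Q := \sum_chi E chi *m Pi *m dag (E chi).
  have QQt a b : E a *m Pi *m dag (E a) *m (E b *m Pi *m dag (E b))
      = if a == b then E a *m Pi *m dag (E a) else 0.
    transitivity (E a *m (Pi *m dag (E a) *m E b *m Pi) *m dag (E b)); first by rewrite !mulmxA.
    by rewrite Cd; case: eqP => [->|_]; rewrite ?mulmx0 ?mul0mx.
  have QQ : Q *m Q = Q.
    rewrite /Q mulmx_suml; apply: eq_bigr => a _; rewrite mulmx_sumr.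
    under eq_bigr => b _ do rewrite QQt.
    rewrite (bigD1 a) //= eqxx big1 ?addr0 // => b /negbTE; by rewrite eq_sym => ->.
  have Qh : dag Q = Q.
    by rewrite /Q dag_sum; apply: eq_bigr => a _; rewrite !dagM dagK Piherm mulmxA.
  have trQ : \tr Q = \tr (1%:M : 'M[algC]_(2 ^ n)).
    rewrite -sumUhPiUh /Q !raddf_sum /=; apply: eq_bigr => a _.
    rewrite [LHS]mxtrace_mulC mulmxA (Eu a).1 mul1mx.
    by rewrite [RHS]mxtrace_mulC mulmxA UhUh mul1mx.
  have A0 : 1%:M - Q = 0.
    apply: proj_tr0.
    - by rewrite dagB dag1 Qh.
    - by rewrite mulmxBl mulmxBr !mul1mx mulmxBr mulmx1 QQ subrr subr0.
    - by rewrite raddfB /= trQ subrr.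
  by apply/eqP; rewrite eq_sym -subr_eq0 A0.
have sumdEPiE : \sum_chi dag (E chi) *m Pi *m E chi = 1%:M.
  by rewrite -sumEPiE; apply: eq_bigr => x _; apply: pg_sandwich.
have hinj : injective (h^~ g) := bij_inj (hbij g).
have T a b : dag (Ph (h a g) *m Pi *m E a) *m (Ph (h b g) *m Pi *m E b)
    = if a == b then (2 ^ m)%:R^-1 *: (dag (E a) *m Pi *m E a) else 0.
  rewrite !dagM Phherm Piherm.
  transitivity (dag (E a) *m (Pi *m (Ph (h a g) *m Ph (h b g)) *m Pi) *m E b); first by rewrite !mulmxA.
  rewrite PhPh; case: eqP => [e|ne].
    have ab : a = b := hinj _ _ e.
    by rewrite -ab eqxx (PiPhPi (h a g)) -scalemxAr -scalemxAl.
  case: (eqVneq a b) => [ab|_]; first by case: ne; rewrite ab.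
  by rewrite mulmx0 mul0mx mulmx0 mul0mx.
move=> Ehat.
have D : dag Ehat *m Ehat = 1%:M.
  rewrite /Ehat dagZ dag_sum -scalemxAl -scalemxAr scalerA.
  have sq : (sqrtC (2 ^ m)%:R)^* * sqrtC (2 ^ m)%:R = (2 ^ m)%:R :> algC.
    by rewrite geC0_conj ?sqrtC_ge0 ?ler0n // -expr2 sqrtCK.
  rewrite sq mulmx_suml.
  under eq_bigr => a _ do rewrite mulmx_sumr.
  under eq_bigr => a _ do under eq_bigr => b _ do rewrite T.
  rewrite (eq_bigr (fun a => (2 ^ m)%:R^-1 *: (dag (E a) *m Pi *m E a))); last first.
    move=> a _; rewrite (bigD1 a) //= eqxx big1 ?addr0 // => b /negbTE.
    by rewrite eq_sym => ->.
  by rewrite -scaler_sumr sumdEPiE scalerA mulfV // scale1r.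
split; first by split; [exact: D | exact: mulmx1C D].
rewrite /Ehat -scalemxAl mulmx_suml; congr (_ *: _).
rewrite (bigD1 (triv m)) //= big1 ?addr0.
  rewrite hh1 ?(is_trivP (triv m)) // hE1 ?(is_trivP (triv m)) //.
  by rewrite mulmx1 -mulmxA PiPi.
move=> chi nt.
by rewrite -!mulmxA [Pi *m (E chi *m Pi)]mulmxA PiEPi // mulmx0.
Qed.
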